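(* Let $\mathbb K\in\{\mathbb R,\mathbb C\}$ and let $T$ be a norm one symmetric bilinear form on the Hilbert space $\mathbb K^2$ (with its standard inner product) that attains its norm at $(\mathbf{x},\mathbf{y})$, where $\mathbf{x},\mathbf{y}$ are norm one vectors with $\mathbf{x}\nparallel\mathbf{y}$. Then there is an orthonormal basis $F=\{\mathbf{f}_1,\mathbf{f}_2\}$ of $\mathbb K^2$ such that $$[T]_F=\begin{pmatrix}1&0\\0&-1\end{pmatrix}.$$ Consequently, the matrix $[T]_G$ is unitary for every orthonormal basis $G$ of $\mathbb K^2$. Moreover, in the real case the basis $\{\mathbf{f}_1,\mathbf{f}_2\}$ is unique up to signs.
   Context: $\mathbf{x}\parallel\mathbf{y}$ means $\mathbf{x}=\lambda\mathbf{y}$ for some $\lambda\in\mathbb K$, and $\mathbf{x}\nparallel\mathbf{y}$ means this fails. A bilinear form is $\mathbb K$-bilinear (not sesquilinear); its norm is $\|T\|=\sup\{|T(\mathbf{w}_1,\mathbf{w}_2)|:\|\mathbf{w}_1\|,\|\mathbf{w}_2\|\le1\}$, and $T$ attains its norm at $(\mathbf{x},\mathbf{y})$ if $|T(\mathbf{x},\mathbf{y})|=\|T\|$. For a basis $F=\{\mathbf{f}_1,\mathbf{f}_2\}$, $[T]_F$ is the matrix $(T(\mathbf{f}_i,\mathbf{f}_j))_{i,j}$, so $T(\mathbf{w}_1,\mathbf{w}_2)=[\mathbf{w}_1]_F[T]_F[\mathbf{w}_2]_F^t$ with $[\mathbf{w}]_F$ the row coordinate vector of $\mathbf{w}$ in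 $F$. *)

(* Defs.v *)
From mathcomp Require Import all_boot all_order all_algebra.
From mathcomp Require Import complex.
From mathcomp Require Import reals.
Set Implicit Arguments. Unset Strict Implicit. Unset Printing Implicit Defensive.
Import Order.TTheory GRing.Theory Num.Theory.
Local Open Scope ring_scope.

(* K^2 is modelled as row vectors 'rV[K]_2.  [cj] is the conjugation of K
   (the identity when K = R, complex conjugation when K = C). *)

Definition dotp (K : numFieldType) (cj : K -> K) (u v : 'rV[K]_2) : K :=
  \sum_(i < 2) u 0 i * cj (v 0 i).

Definition in_ball (K : numFieldType) (cj : K -> K) (w : 'rV[K]_2) : Prop :=
  dotp cj w w <= 1.
Definition unit_vec (K : numFieldType) (cj : K -> K) (w : 'rV[K]_2) : Prop :=
  dotp cj w w = 1.

Definition bilinear_form (K : numFieldType) (T : 'rV[K]_2 -> 'rV[K]_2 -> K) : Prop :=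
  (forall (a : K) u u' v, T (a *: u + u') v = a * T u v + T u' v) /\
  (forall (a : K) u v v', T u (a *: v + v') = a * T u v + T u v').
Definition symmetric_form (K : numFieldType) (T : 'rV[K]_2 -> 'rV[K]_2 -> K) : Prop :=
  forall u v, T u v = T v u.

Definition is_form_norm (K : numFieldType) (cj : K -> K)
    (T : 'rV[K]_2 -> 'rV[K]_2 -> K) (c : K) : Prop :=
  (forall w1 w2, in_ball cj w1 -> in_ball cj w2 -> `|T w1 w2| <= c) /\
  (forall d : K, (forall w1 w2, in_ball cj w1 -> in_ball cj w2 -> `|T w1 w2| <= d) ->
     c <= d).

Definition parallel (K : numFieldType) (x y : 'rV[K]_2) : Prop :=
  exists l : K, x = l *: y.

(* F = {F 0, F 1} is an orthonormal basis of K^2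
   (an orthonormal pair in the 2-dimensional space K^2 is a basis) *)
Definition orthonormal_basis (K : numFieldType) (cj : K -> K) (F : 'I_2 -> 'rV[K]_2) : Prop :=
  forall i j, dotp cj (F i) (F j) = (i == j)%:R.

Definition form_matrix (K : numFieldType) (T : 'rV[K]_2 -> 'rV[K]_2 -> K)
    (F : 'I_2 -> 'rV[K]_2) : 'M[K]_2 :=
  \matrix_(i, j) T (F i) (F j).

Definition diag1m1 (K : numFieldType) : 'M[K]_2 :=
  \matrix_(i, j) (if i == j then (if i == 0 then 1 else -1) else 0).

Definition unitary_mx (K : numFieldType) (cj : K -> K) (M : 'M[K]_2) : Prop :=
  M *m (map_mx cj M)^T = 1%:M.

Definition lemma_hyps (K : numFieldType) (cj : K -> K)
    (T : 'rV[K]_2 -> 'rV[K]_2 -> K) (x y : 'rV[K]_2) : Prop :=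
  [/\ bilinear_form T, symmetric_form T, is_form_norm cj T 1,
      unit_vec cj x /\ unit_vec cj y & ~ parallel x y /\ `|T x y| = 1].

Definition lemma_main (K : numFieldType) (cj : K -> K) : Prop :=
  forall (T : 'rV[K]_2 -> 'rV[K]_2 -> K) (x y : 'rV[K]_2),
    lemma_hyps cj T x y ->
    (exists F, orthonormal_basis cj F /\ form_matrix T F = diag1m1 K) /\
    (forall G, orthonormal_basis cj G -> unitary_mx cj (form_matrix T G)).

Definition lemma_unique (K : numFieldType) (cj : K -> K) : Prop :=
  forall (T : 'rV[K]_2 -> 'rV[K]_2 -> K) (x y : 'rV[K]_2),
    lemma_hyps cj T x y ->
    forall F G, orthonormal_basis cj F -> form_matrix T F = diag1m1 K ->
      orthonormal_basis cj G -> form_matrix T G = diag1m1 K ->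
      forall i, G i = F i \/ G i = - F i.

(* Main.v *)
Require Import Defs.
From mathcomp Require Import all_boot all_order all_algebra.
From mathcomp Require Import complex ring lra.
From mathcomp Require Import reals.
Set Implicit Arguments. Unset Strict Implicit. Unset Printing Implicit Defensive.
Import Order.TTheory GRing.Theory Num.Theory.
Local Open Scope ring_scope.

Lemma ord2_ind (P : 'I_2 -> Prop) : P 0 -> P 1 -> forall i, P i.
Proof.
move=> p0 p1 [[|[|i]] hi] //.
- by have -> : Ordinal hi = 0 by apply/val_inj.
- by have -> : Ordinal hi = 1 by apply/val_inj.
Qed.

Lemma sum2 (V : nmodType) (F : 'I_2 -> V) : \sum_(i < 2) F i = F 0 + F 1.
Proof. by rewrite !big_ord_recl big_ord0 addr0; congr (F _ + F _); apply/val_inj. Qed.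

Section Gen.
Variable K : numFieldType.
Variable cj : {rmorphism K -> K}.
Hypothesis cjK : involutive cj.
Hypothesis cjN : forall z, z * cj z = `|z| ^+ 2.
Hypothesis cjS : forall r : K, 0 < r -> exists s, cj s = s /\ s * s * r = 1.

Notation dot := (dotp cj).
Definition e (i : 'I_2) : 'rV[K]_2 := delta_mx 0 i.

Lemma rowdec (u : 'rV[K]_2) : u = u 0 0 *: e 0 + u 0 1 *: e 1.
Proof.
apply/rowP; elim/ord2_ind; rewrite !mxE /=; ring.
Qed.

Lemma dotpE u v : dot u v = u 0 0 * cj (v 0 0) + u 0 1 * cj (v 0 1).
Proof. by rewrite /dotp sum2. Qed.

Lemma dotpC u v : dot v u = cj (dot u v).
Proof. rewrite !dotpE rmorphD !rmorphM !cjK; ring. Qed.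

Lemma dotpDZl a u u' v : dot (a *: u + u') v = a * dot u v + dot u' v.
Proof. rewrite !dotpE !mxE; ring. Qed.

Lemma dotpDZr a u v v' : dot u (a *: v + v') = cj a * dot u v + dot u v'.
Proof. rewrite !dotpE !mxE !rmorphD !rmorphM; ring. Qed.

Lemma dotpZZ a b u v : dot (a *: u) (b *: v) = a * cj b * dot u v.
Proof. rewrite !dotpE !mxE !rmorphM; ring. Qed.

Lemma dotpDr u v w : dot u (v + w) = dot u v + dot u w.
Proof. rewrite !dotpE !mxE !rmorphD; ring. Qed.

Lemma dotpBr u v w : dot u (v - w) = dot u v - dot u w.
Proof. rewrite !dotpE !mxE !rmorphB; ring. Qed.

Lemma dotpZr a u v : dot u (a *: v) = cj a * dot u v.
Proof. rewrite !dotpE !mxE !rmorphM; ring. Qed.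

Lemma dotpZl a u v : dot (a *: u) v = a * dot u v.
Proof. rewrite !dotpE !mxE; ring. Qed.

Lemma dotpBB u v : dot (u - v) (u - v) = dot u u - dot u v - dot v u + dot v v.
Proof. rewrite !dotpE !mxE !rmorphB; ring. Qed.

Lemma dotp_norm u : dot u u = `|u 0 0| ^+ 2 + `|u 0 1| ^+ 2.
Proof. by rewrite dotpE !cjN. Qed.

Lemma dotp_ge0 u : 0 <= dot u u.
Proof. by rewrite dotp_norm addr_ge0 // exprn_ge0. Qed.

Lemma dotp_eq0 u : dot u u = 0 -> u = 0.
Proof.
rewrite dotp_norm => /eqP; rewrite paddr_eq0 ?exprn_ge0 //.
rewrite !expf_eq0 /= !normr_eq0 => /andP [/eqP h0 /eqP h1].
by apply/rowP; elim/ord2_ind; rewrite mxE.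
Qed.

Lemma dotp_cjself u : cj (dot u u) = dot u u.
Proof. by rewrite -dotpC. Qed.


Section Form.
Variable T : 'rV[K]_2 -> 'rV[K]_2 -> K.
Hypothesis hb : bilinear_form T.

Lemma T0l v : T 0 v = 0.
Proof.
have := hb.1 1 0 0 v; rewrite scale1r addr0 mul1r -{1}(addr0 (T 0 v)).
by move/addrI.
Qed.
Lemma T0r v : T v 0 = 0.
Proof.
have := hb.2 1 v 0 0; rewrite scale1r addr0 mul1r -{1}(addr0 (T v 0)).
by move/addrI.
Qed.
Lemma TDl u u' v : T (u + u') v = T u v + T u' v.
Proof. by have := hb.1 1 u u' v; rewrite scale1r mul1r. Qed.
Lemma TDr u v v' : T u (v + v') = T u v + T u v'.
Proof. by have := hb.2 1 u v v'; rewrite scale1r mul1r. Qed.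
Lemma TZl a u v : T (a *: u) v = a * T u v.
Proof. by have := hb.1 a u 0 v; rewrite !addr0 T0l addr0. Qed.
Lemma TZr a u v : T u (a *: v) = a * T u v.
Proof. by have := hb.2 a u v 0; rewrite !addr0 T0r addr0. Qed.
Lemma TBr u v v' : T u (v - v') = T u v - T u v'.
Proof. by rewrite TDr -scaleN1r TZr mulN1r. Qed.

Lemma Trep v : exists z, forall u, T u v = dot u z.
Proof.
exists (\row_k cj (T (e k) v)) => u.
by rewrite {1}(rowdec u) TDl !TZl dotpE !mxE !cjK.
Qed.

Lemma key (x y : 'rV[K]_2) :
  (forall w1 w2, in_ball cj w1 -> in_ball cj w2 -> `|T w1 w2| <= 1) ->
  unit_vec cj x -> unit_vec cj y -> T x y = 1 -> forall u, T u y = dot u x.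
Proof.
move=> hn hx hy hxy.
have [z hz] := Trep y.
have hxz : dot x z = 1 by rewrite -hz.
have N0 : 0 <= dot z z by apply: dotp_ge0.
have N1 : dot z z <= 1.
  have [/eqP -> | nz] := boolP (dot z z == 0); first exact: ler01.
  have Np : 0 < dot z z by rewrite lt0r nz N0.
  have [s [cs ss]] := cjS Np.
  have h : `|T (s *: z) y| <= 1.
    apply: hn; last by rewrite /in_ball hy.
    by rewrite /in_ball dotpZZ cs ss.
  rewrite hz dotpZl in h.
  have <- : `|s * dot z z| ^+ 2 = dot z z.
    rewrite -cjN rmorphM cs dotp_cjself.
    by rewrite -[RHS]mul1r -ss; ring.
  by apply: exprn_ile1.
have hd : dot (x - z) (x - z) = dot z z - 1.
  rewrite dotpBB hxz (dotpC x z) hxz rmorph1 hx; ring.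
have : dot (x - z) (x - z) = 0.
  apply/le_anti; rewrite dotp_ge0 andbT hd subr_le0 //.
move/dotp_eq0/eqP; rewrite subr_eq0 => /eqP xz u.
by rewrite hz xz.
Qed.

End Form.

Lemma exist_F T x y : lemma_hyps cj T x y ->
  exists F, orthonormal_basis cj F /\ form_matrix T F = diag1m1 K.
Proof.
case=> hb hs [hn _] [hx hy] [hnp hxy].
set t := T x y.
set x' := cj t *: x.
have ht : t * cj t = 1 by rewrite cjN hxy expr1n.
have hx' : unit_vec cj x'.
  by rewrite /unit_vec dotpZZ hx cjK mulr1 mulrC.
have hxy' : T x' y = 1 by rewrite TZl // mulrC.
have hnp' : ~ parallel x' y.
  move=> [l hl]; apply: hnp; exists (t * l).
  by rewrite -scalerA -hl /x' scalerA ht scale1r.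
have hyx' : T y x' = 1 by rewrite hs.
have k1 := key hb hn hx' hy hxy'.
have k2 := key hb hn hy hx' hyx'.
set g := x' + y.
set h := x' - y.
have kg : forall u, T u g = dot u g.
  by move=> u; rewrite TDr // k1 k2 dotpDr addrC.
have kh : forall u, T u h = - dot u h.
  by move=> u; rewrite TBr // k1 k2 dotpBr opprB.
have yn0 : y != 0.
  apply/eqP => y0; move: hy; rewrite /unit_vec y0 dotpE !mxE !mul0r addr0.
  by move/eqP; rewrite eq_sym oner_eq0.
have g0 : g != 0.
  apply/eqP => hg; apply: hnp'; exists (-1).
  by rewrite scaleN1r; apply/eqP; rewrite -addr_eq0 -/g hg.
have Gp : 0 < dot g g.
  rewrite lt0r dotp_ge0 andbT; apply/eqP => /dotp_eq0 /eqP; exact/negP.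
set G := dot g g in Gp.
set p := dot g h.
have cp : cj p = - p.
  by have := hs g h; rewrite kg kh (dotpC g h) -/p => ->.
set c := p / G.
have cG : cj G = G by rewrite dotp_cjself.
have cc : cj c = - c by rewrite fmorph_div cp cG mulNr.
set h' := h + c *: g.
have kh' : forall u, T u h' = - dot u h'.
  move=> u; rewrite TDr // TZr // kh kg.
  rewrite [dot u h']dotpDr dotpZr cc; ring.
have orth : dot g h' = 0.
  rewrite dotpDr dotpZr cc -/p -/G /c mulNr divfK ?subrr //.
  by rewrite gt_eqF.
have h'0 : h' != 0.
  apply/eqP => hh.
  have e1 : (1 + c) *: x' = (1 - c) *: y.
    apply/eqP; rewrite -subr_eq0; apply/eqP; rewrite -hh /h' /h /g.
    apply/rowP => k; rewrite !mxE; ring.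
  have [c1 | c1] := eqVneq (1 + c) 0.
    have c' : c = -1 by apply/eqP; rewrite -addr_eq0 addrC c1.
    move: e1; rewrite c1 scale0r c' opprK => /esym /eqP.
    rewrite scaler_eq0 (negbTE yn0) orbF.
    have two : (1 + 1 : K) != 0.
      by rewrite (_ : 1 + 1 = 2%:R) ?pnatr_eq0 // mulr2n.
    by rewrite (negbTE two).
  apply: hnp'; exists ((1 - c) / (1 + c)).
  by rewrite mulrC -scalerA -e1 scalerA mulVf // scale1r.
have Hp : 0 < dot h' h'.
  rewrite lt0r dotp_ge0 andbT; apply/eqP => /dotp_eq0 /eqP; exact/negP.
have [s1 [cs1 ss1]] := cjS Gp.
have [s2 [cs2 ss2]] := cjS Hp.
set f1 := s1 *: g.
set f2 := s2 *: h'.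
have kf1 : forall u, T u f1 = dot u f1.
  by move=> u; rewrite TZr // kg dotpZr cs1.
have kf2 : forall u, T u f2 = - dot u f2.
  by move=> u; rewrite TZr // kh' dotpZr cs2 mulrN.
have d11 : dot f1 f1 = 1 by rewrite dotpZZ cs1.
have d22 : dot f2 f2 = 1 by rewrite dotpZZ cs2.
have d12 : dot f1 f2 = 0 by rewrite dotpZZ orth mulr0.
have d21 : dot f2 f1 = 0 by rewrite dotpC d12 rmorph0.
exists (fun i : 'I_2 => if i == 0 then f1 else f2); split.
  by elim/ord2_ind; elim/ord2_ind.
apply/matrixP; elim/ord2_ind; elim/ord2_ind; rewrite !mxE /=.
- by rewrite kf1 d11.
- by rewrite kf2 d12 oppr0.
- by rewrite kf1 d21.
- by rewrite kf2 d22.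
Qed.

Definition Amx (T : 'rV[K]_2 -> 'rV[K]_2 -> K) : 'M[K]_2 := \matrix_(i, j) T (e i) (e j).
Definition Fm (F : 'I_2 -> 'rV[K]_2) : 'M[K]_2 := \matrix_(i, j) F i 0 j.

Lemma TE T : bilinear_form T -> forall u v, T u v = (u *m Amx T *m v^T) 0 0.
Proof.
move=> hb u v.
have -> : T u v = T (u 0 0 *: e 0 + u 0 1 *: e 1) (v 0 0 *: e 0 + v 0 1 *: e 1) by rewrite -!rowdec.
rewrite !TDl // !TDr // !TZl // !TZr // !(mxE, sum2); ring.
Qed.

Lemma formE T : bilinear_form T -> forall F, form_matrix T F = Fm F *m Amx T *m (Fm F)^T.
Proof.
move=> hb F; apply/matrixP => i j; rewrite mxE TE // !(mxE, sum2); ring.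
Qed.

Lemma orthoE F : orthonormal_basis cj F -> Fm F *m (map_mx cj (Fm F))^T = 1%:M.
Proof. by move=> hF; apply/matrixP => i j; rewrite !mxE sum2 !mxE -hF dotpE. Qed.

Lemma mapK (M : 'M[K]_2) : map_mx cj (map_mx cj M) = M.
Proof. by apply/matrixP => i j; rewrite !mxE cjK. Qed.

Lemma mapD : map_mx cj (diag1m1 K) = diag1m1 K.
Proof.
apply/matrixP; elim/ord2_ind; elim/ord2_ind; rewrite !mxE /= ?rmorph0 ?rmorph1 ?rmorphN1 //.
Qed.

Lemma trD : (diag1m1 K)^T = diag1m1 K.
Proof. by apply/matrixP; elim/ord2_ind; elim/ord2_ind; rewrite !mxE. Qed.

Lemma DD : diag1m1 K *m diag1m1 K = 1%:M.
Proof.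
apply/matrixP; elim/ord2_ind; elim/ord2_ind; rewrite !(mxE, sum2) /=; ring.
Qed.

Lemma unit_all T x y : lemma_hyps cj T x y ->
  forall G, orthonormal_basis cj G -> unitary_mx cj (form_matrix T G).
Proof.
move=> H; have [F [hF hFD]] := exist_F H.
case: H => hb _ _ _ _ G hG.
have hU := orthoE hF.
have hU1 := mulmx1C hU.
have hU2 : map_mx cj (Fm F) *m (Fm F)^T = 1%:M.
  by have := congr1 (map_mx cj) hU; rewrite map_mxM map_mx1 -map_trmx mapK.
have hU3 := mulmx1C hU2.
have hA : Amx T = (map_mx cj (Fm F))^T *m diag1m1 K *m map_mx cj (Fm F).
  rewrite -hFD formE // !mulmxA hU1 mul1mx -mulmxA hU3 mulmx1 //.
have hAu : Amx T *m (map_mx cj (Amx T))^T = 1%:M.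
  rewrite {1}hA hA !map_mxM -map_trmx mapK mapD !trmx_mul trmxK trD.
  rewrite !mulmxA -(mulmxA _ (map_mx cj (Fm F))) hU2 mulmx1.
  by rewrite -(mulmxA _ (diag1m1 K) (diag1m1 K)) DD mulmx1 hU1.
have hV := orthoE hG.
have hV2 : map_mx cj (Fm G) *m (Fm G)^T = 1%:M.
  by have := congr1 (map_mx cj) hV; rewrite map_mxM map_mx1 -map_trmx mapK.
have hV3 := mulmx1C hV2.
rewrite /unitary_mx formE // !map_mxM !trmx_mul -map_trmx trmxK.
rewrite !mulmxA -(mulmxA _ (Fm G)^T) hV3 mulmx1.
by rewrite -(mulmxA (Fm G)) hAu mulmx1.
Qed.

Lemma main_gen : lemma_main cj.
Proof. by move=> T x y H; split; [exact: exist_F H | exact: unit_all H]. Qed.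

End Gen.

Section Real.
Variable R : realType.

Lemma mapid (M : 'M[R]_2) : map_mx (fun r : R => r) M = M.
Proof. by apply/matrixP => i j; rewrite mxE. Qed.

Lemma uniq_real : lemma_unique (fun r : R => r).
Proof.
move=> T x y [hb _ _ _ _] F G hF hFD hG hGD.
have hU : Fm F *m (Fm F)^T = 1%:M.
  by have := @orthoE R idfun F hF; rewrite mapid.
have hV : Fm G *m (Fm G)^T = 1%:M.
  by have := @orthoE R idfun G hG; rewrite mapid.
have hU1 := mulmx1C hU.
have hV1 := mulmx1C hV.
have hA : Amx T = (Fm F)^T *m diag1m1 R *m Fm F.
  by rewrite -hFD formE // !mulmxA hU1 mul1mx -mulmxA hU1 mulmx1.
set W := Fm G *m (Fm F)^T.
have hWD : W *m diag1m1 R *m W^T = diag1m1 R.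
  by rewrite -{2}hGD (formE hb) hA /W trmx_mul trmxK !mulmxA.
have hWW : W^T *m W = 1%:M.
  rewrite /W trmx_mul trmxK !mulmxA -(mulmxA _ (Fm G)^T) hV1 mulmx1 //.
have hVW : Fm G = W *m Fm F by rewrite /W -mulmxA hU1 mulmx1.
clearbody W.
have hcomm : W *m diag1m1 R = diag1m1 R *m W.
  by rewrite -{2}hWD -mulmxA hWW mulmx1.
have hWW' := mulmx1C hWW.
have w01 : W 0 1 = 0.
  have := congr1 (fun M : 'M[R]_2 => M 0 1) hcomm; rewrite !(mxE, sum2) /=.
  move=> h; lra.
have w10 : W 1 0 = 0.
  have := congr1 (fun M : 'M[R]_2 => M 1 0) hcomm; rewrite !(mxE, sum2) /=.
  move=> h; lra.
have w00 : W 0 0 ^+ 2 = 1.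
  have := congr1 (fun M : 'M[R]_2 => M 0 0) hWW'; rewrite !(mxE, sum2) /= w01.
  by rewrite mulr0 addr0 expr2 => ->.
have w11 : W 1 1 ^+ 2 = 1.
  have := congr1 (fun M : 'M[R]_2 => M 1 1) hWW'; rewrite !(mxE, sum2) /= w10.
  by rewrite mulr0 add0r expr2 => ->.
have hGk : forall i k, G i 0 k = W i 0 * F 0 0 k + W i 1 * F 1 0 k.
  move=> i k; have := congr1 (fun M : 'M[R]_2 => M i k) hVW; rewrite !(mxE, sum2) //.
elim/ord2_ind.
- move/eqP: w00; rewrite sqrf_eq1 => /orP [] /eqP w.
    by left; apply/rowP => k; rewrite hGk w w01; ring.
  by right; apply/rowP => k; rewrite hGk w w01 !mxE; ring.
- move/eqP: w11; rewrite sqrf_eq1 => /orP [] /eqP w.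
    by left; apply/rowP => k; rewrite hGk w w10; ring.
  by right; apply/rowP => k; rewrite hGk w w10 !mxE; ring.
Qed.
End Real.

Theorem lemma2p1 (R : realType) :
  [/\ lemma_main (fun r : R => r),
      lemma_main (fun z : R[i] => Num.conj z) &
      lemma_unique (fun r : R => r)].
Proof.
split.
- have cjN : forall z : R, z * idfun z = `|z| ^+ 2.
    by move=> z; rewrite real_normK ?num_real // expr2.
  have cjS : forall r : R, 0 < r -> exists s, idfun s = s /\ s * s * r = 1.
    move=> r hr; exists (Num.sqrt r)^-1; split => //.
    by rewrite -expr2 exprVn sqr_sqrtr ?ltW // mulVf // gt_eqF.
  exact: (@main_gen R idfun (fun _ => erefl) cjN cjS).
- have cjN : forall z : R[i], z * Num.conj z = `|z| ^+ 2.
    by move=> z; rewrite normCK.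
  have cjS : forall r : R[i], 0 < r -> exists s, Num.conj s = s /\ s * s * r = 1.
    move=> r hr; exists (sqrtC r)^-1; split.
      by apply: geC0_conj; rewrite invr_ge0 sqrtC_ge0 ltW.
    by rewrite -expr2 exprVn sqrtCK mulVf // gt_eqF.
  exact: (@main_gen _ Num.conj (@conjCK _) cjN cjS).
- exact: uniq_real.
Qed.
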